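(* Let $T$ be a complete theory with monster model $\mathcal{U}$, $\mu\in\mathfrak{M}_x(\mathcal{U})$, $\nu\in\mathfrak{M}_y(\mathcal{U})$. If $\mu\geq_{\mathbb{E}}\nu$ and $\mu$ is smooth, then $\nu$ is smooth.
   Context: For $C\subseteq\mathcal{U}$, $\mathcal{L}_x(C)$ is the Boolean algebra of formulas in $x$ with parameters from $C$ modulo $T$, embedded in $\mathcal{L}_{xy}(C)$ via $\varphi(x)\mapsto\varphi(x)\wedge y=y$; $\mathfrak{M}_x(C)$ is the set of finitely additive probability measures on $\mathcal{L}_x(C)$. For $\omega\in\mathfrak{M}_{xy}(C)$, $\pi_x(\omega)(\varphi(x))=\omega(\varphi(x)\wedge y=y)$ (similarly $\pi_y$); $\omega|_D$ is restriction. For small $A$, $\mu\geq_{\mathbb{E},A}\nu$ means there is $\lambda\in\mathfrak{M}_{xy}(A)$ with $\pi_x(\lambda)=\mu|_A$ such that every $\omega\in\mathfrak{M}_{xy}(\mathcal{U})$ with $\omega|_A=\lambda$ and $\pi_x(\omega)=\mu$ satisfies $\pi_y(\omega)=\nu$; $\mu\geq_{\mathbb{E}}\nu$ means this for some small $A$. A global measure is smooth over $A$ if it is the unique global measure (in its variables) with its restriction to $A$; it is smooth if smooth over some small $A$. *)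

(* Defs.v *)
From mathcomp Require Import all_boot all_order all_algebra.
From mathcomp Require Import classical_sets reals.
From Stdlib Require Import List.
Set Implicit Arguments. Unset Strict Implicit. Unset Printing Implicit Defensive.
Import Order.TTheory GRing.Theory Num.Theory.
Local Open Scope classical_set_scope.
Local Open Scope ring_scope.

Record language := Language {
  Fsym : Type; Fari : Fsym -> nat;
  Rsym : Type; Rari : Rsym -> nat }.

Record interp (L : language) (M : Type) := Interp {
  fint : forall f : Fsym L, ('I_(Fari f) -> M) -> M;
  rint : forall r : Rsym L, ('I_(Rari r) -> M) -> Prop }.

(* Terms and formulas (de Bruijn variables [tvar i]); parameters are
   elements of the parameter type [P] (we take [P := M]). *)
Inductive term (L : language) (P : Type) : Type :=
| tvar : nat -> term L P
| tpar : P -> term L P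
| tapp : forall f : Fsym L, ('I_(Fari f) -> term L P) -> term L P.

Inductive formula (L : language) (P : Type) : Type :=
| feq : term L P -> term L P -> formula L P
| frel : forall r : Rsym L, ('I_(Rari r) -> term L P) -> formula L P
| fnot : formula L P -> formula L P
| fand : formula L P -> formula L P -> formula L P
| fex : formula L P -> formula L P.  (* binds variable 0 *)

Section Semantics.
Variables (L : language) (M : Type) (I : interp L M).

Definition scons (m : M) (e : nat -> M) : nat -> M :=
  fun i => match i with 0 => m | S j => e j end.

Fixpoint teval (e : nat -> M) (t : term L M) : M :=
  match t with
  | tvar i => e i
  | tpar c => c
  | tapp f args => fint I (fun j => teval e (args j))
  end.

Fixpoint sat (e : nat -> M) (phi : formula L M) : Prop :=
  match phi with
  | feq t1 t2 => teval e t1 = teval e t2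
  | frel r args => rint I (fun j => teval e (args j))
  | fnot psi => ~ sat e psi
  | fand psi chi => sat e psi /\ sat e chi
  | fex psi => exists m, sat (scons m e) psi
  end.

Fixpoint tparams_in (C : set M) (t : term L M) : Prop :=
  match t with
  | tvar _ => True
  | tpar c => C c
  | tapp f args => forall j, tparams_in C (args j)
  end.

Fixpoint params_in (C : set M) (phi : formula L M) : Prop :=
  match phi with
  | feq t1 t2 => tparams_in C t1 /\ tparams_in C t2
  | frel r args => forall j, tparams_in C (args j)
  | fnot psi => params_in C psi
  | fand psi chi => params_in C psi /\ params_in C chi
  | fex psi => params_in C psi
  end.

(* The Boolean algebra L_x(C) (x a tuple of n variables): formulas in   *)
(* x with parameters from C modulo T = Th(U), i.e. (since T is the      *)
(* complete theory of U) the C-definable subsets of U^n.                *)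

Definition definable (n : nat) (C : set M) (D : set ('I_n -> M)) : Prop :=
  exists phi : formula L M, params_in C phi /\
    forall e : nat -> M, D (fun i : 'I_n => e (nat_of_ord i)) <-> sat e phi.

(* finitely additive probability measures on L_n(C); a measure is a
   function on sets of n-tuples of which only the values on L_n(C)
   matter (all comparisons below are made on L_n(C) only). *)
Definition fa_prob (R : realType) (n : nat) (C : set M)
    (m : set ('I_n -> M) -> R) : Prop :=
  m setT = 1 /\
  (forall D, definable C D -> 0 <= m D) /\
  (forall D1 D2, definable C D1 -> definable C D2 -> D1 `&` D2 = set0 ->
     m (D1 `|` D2) = m D1 + m D2).

Definition agree (R : realType) (n : nat) (C : set M)
    (m1 m2 : set ('I_n -> M) -> R) : Prop :=
  forall D, definable C D -> m1 D = m2 D.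

(* measures in variables x (length n) and y (length k): the tuple xy is
   'I_(n + k) -> M, x being the first n coordinates.
   pi_x(w)(phi(x)) = w(phi(x) /\ y = y), similarly pi_y. *)
Definition pix (R : realType) (n k : nat) (w : set ('I_(n + k) -> M) -> R)
  : set ('I_n -> M) -> R :=
  fun D => w [set a | D (fun i => a (lshift k i))].

Definition piy (R : realType) (n k : nat) (w : set ('I_(n + k) -> M) -> R)
  : set ('I_k -> M) -> R :=
  fun D => w [set a | D (fun i => a (rshift n i))].

(* Monster model: U is kappa-saturated and strongly kappa-homogeneous,  *)
(* kappa infinite; "small" means of cardinality < kappa.               *)

Definition small (K : Type) (A : set M) : Prop :=
  (exists f : M -> K, forall a b, A a -> A b -> f a = f b -> a = b) /\
  ~ (exists g : K -> M, injective g /\ forall k, A (g k)).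

Definition one_var (phi : formula L M) : Prop :=
  forall e e' : nat -> M, e 0%N = e' 0%N -> (sat e phi <-> sat e' phi).

Definition saturated (K : Type) : Prop :=
  forall (A : set M) (Sigma : set (formula L M)), small K A ->
    (forall phi, Sigma phi -> params_in A phi /\ one_var phi) ->
    (forall s : list (formula L M), (forall phi, In phi s -> Sigma phi) ->
       exists m : M, forall phi, In phi s -> sat (fun _ => m) phi) ->
    exists m : M, forall phi, Sigma phi -> sat (fun _ => m) phi.

Definition automorphism (s : M -> M) : Prop :=
  bijective s /\
  (forall (f : Fsym L) (args : 'I_(Fari f) -> M),
     s (@fint L M I f args) = @fint L M I f (fun j => s (args j))) /\
  (forall (r : Rsym L) (args : 'I_(Rari r) -> M),
     @rint L M I r args <-> @rint L M I r (fun j => s (args j))).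

Definition elementary_on (A : set M) (f : M -> M) : Prop :=
  forall (phi : formula L M) (e : nat -> M), params_in set0 phi ->
    (forall i, A (e i)) -> (sat e phi <-> sat (fun i => f (e i)) phi).

Definition strongly_homogeneous (K : Type) : Prop :=
  forall (A : set M) (f : M -> M), small K A -> elementary_on A f ->
    exists s, automorphism s /\ forall a, A a -> s a = f a.

Definition monster (K : Type) : Prop :=
  inhabited M /\ (exists g : nat -> K, injective g) /\
  saturated K /\ strongly_homogeneous K.

Definition geE_over (R : realType) (n k : nat) (A : set M)
    (mu : set ('I_n -> M) -> R) (nu : set ('I_k -> M) -> R) : Prop :=
  exists lam : set ('I_(n + k) -> M) -> R,
    fa_prob A lam /\ agree A (pix lam) mu /\
    forall w : set ('I_(n + k) -> M) -> R,
      fa_prob setT w -> agree A w lam -> agree setT (pix w) mu ->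
      agree setT (piy w) nu.

Definition geE (K : Type) (R : realType) (n k : nat)
    (mu : set ('I_n -> M) -> R) (nu : set ('I_k -> M) -> R) : Prop :=
  exists A : set M, small K A /\ geE_over A mu nu.

Definition smooth_over (R : realType) (n : nat) (A : set M)
    (mu : set ('I_n -> M) -> R) : Prop :=
  fa_prob setT mu /\
  forall mu' : set ('I_n -> M) -> R,
    fa_prob setT mu' -> agree A mu' mu -> agree setT mu' mu.

Definition smooth (K : Type) (R : realType) (n : nat)
    (mu : set ('I_n -> M) -> R) : Prop :=
  exists A : set M, small K A /\ smooth_over A mu.

End Semantics.

(* Main.v *)
From Pilot Require Import Defs.
From mathcomp Require Import all_boot all_order all_algebra.
From mathcomp Require Import boolp classical_sets reals zify ring lra.
From mathcomp Require Import filter topology normedtype.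
Set Implicit Arguments. Unset Strict Implicit. Unset Printing Implicit Defensive.
Import Order.TTheory GRing.Theory Num.Theory.
Import numFieldNormedType.Exports.
Local Open Scope classical_set_scope.
Local Open Scope ring_scope.
Lemma ultra_fmap (J : Type) (U : set_system J) (T : Type) (f : J -> T) :
  UltraFilter U -> UltraFilter (f @ U).
Proof.
move=> UU; split; first exact: fmap_proper_filter.
move=> G GF sUG; apply/seteqP; split; last exact: sUG.
move=> S GS; have [//|nS] := in_ultra_setVsetC (f @^-1` S) UU.
have GnS : G (~` S) by apply: sUG.
by have /filter_ex [? []] : G (S `&` ~` S) by exact: filterI.
Qed.

Lemma ulim (R : realType) (J : Type) (U : set_system J) (f : J -> R) :
  UltraFilter U -> (forall j, 0 <= f j <= 1) -> exists l : R, 0 <= l <= 1 /\ f @ U --> l.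
Proof.
move=> UU Hf.
have := @segment_compact R 0 1; rewrite compact_ultra => /(_ (f @ U) (ultra_fmap f UU)).
case.
  apply: (@filterS _ U _ setT); last exact: filterT.
  by move=> j _ /=; rewrite in_itv /=; exact: Hf.
by move=> l [/= Hl Hc]; exists l; split => //; move: Hl; rewrite in_itv.
Qed.
Fixpoint inS (T : Type) (x : T) (s : seq T) : Prop :=
  if s is y :: s' then x = y \/ inS x s' else False.

Lemma inS_cat T (x : T) s1 s2 : inS x (s1 ++ s2) <-> inS x s1 \/ inS x s2.
Proof.
elim: s1 => [|y s1 IH] /=; first by split; [right|case].
by rewrite IH; split => [[|[|]]|[[|]|]]; tauto.
Qed.

Lemma inS_map T U (f : T -> U) x s : inS x (map f s) <-> exists y, inS y s /\ x = f y.
Proof.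
elim: s => [|y s IH] /=; first by split => // -[? []].
rewrite IH; split.
  case=> [->|[z [Hz ->]]]; first by exists y; split => //; left.
  by exists z; split => //; right.
case=> z [[->|Hz] ->]; first by left.
by right; exists z.
Qed.

Lemma eq_sum_inS (R : realType) T (s : seq T) (F G : T -> R) :
  (forall t, inS t s -> F t = G t) -> \sum_(t <- s) F t = \sum_(t <- s) G t.
Proof.
elim: s => [|y s IH] H; first by rewrite !big_nil.
rewrite !big_cons H; last by left.
by rewrite IH // => t Ht; apply: H; right.
Qed.

Lemma ge0_sum_inS (R : realType) T (s : seq T) (F : T -> R) :
  (forall t, inS t s -> 0 <= F t) -> 0 <= \sum_(t <- s) F t.
Proof.
elim: s => [|y s IH] H; first by rewrite !big_nil.
rewrite !big_cons addr_ge0 //; first by apply: H; left.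
by apply: IH => t Ht; apply: H; right.
Qed.

Section BA.
Variables (Omega : Type) (R : realType).

Definition balg (B : set Omega -> Prop) :=
  [/\ B setT, (forall X Y, B X -> B Y -> B (X `&` Y)) & (forall X, B X -> B (~` X))].

Definition faon (B : set Omega -> Prop) (m : set Omega -> R) :=
  [/\ m setT = 1, (forall X, B X -> 0 <= m X) &
     (forall X Y, B X -> B Y -> X `&` Y = set0 -> m (X `|` Y) = m X + m Y)].

Variables (B : set Omega -> Prop) (m : set Omega -> R).
Hypotheses (hB : balg B) (hm : faon B m).

Lemma balg0 : B set0.
Proof. by case: hB => BT _ BC; rewrite -setCT; exact: BC. Qed.

Lemma balgU X Y : B X -> B Y -> B (X `|` Y).
Proof.
case: hB => _ BI BC BX BY; rewrite -(setCK (X `|` Y)) setCU; apply: (BC).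
by apply: (BI); apply: (BC).
Qed.

Lemma fa0 : m set0 = 0.
Proof.
case: hm => _ _ add; have := add set0 set0 balg0 balg0 (setI0 _).
by rewrite setU0 => H; lra.
Qed.

Lemma fasplit X Y : B X -> B Y -> m X = m (X `&` Y) + m (X `&` ~` Y).
Proof.
case: hB => _ BI BC; case: hm => _ _ add BX BY.
rewrite -add; [|exact: BI|by apply: (BI) => //; exact: BC|].
  by rewrite -setIUr setUCr setIT.
by rewrite setIACA setICr setI0.
Qed.

Lemma famono X Y : B X -> B Y -> X `<=` Y -> m X <= m Y.
Proof.
case: hB => _ BI BC; case: hm => _ pos _ BX BY XY.
rewrite (fasplit BY BX) (setIidr XY) lerDl; apply: (pos); apply: (BI) => //; exact: BC.
Qed.

Lemma fa_ne0 X : m X != 0 -> exists z, X z.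
Proof.
move=> mX; apply: contra_notP (negP mX) => nX; apply/eqP.
have -> : X = set0 by apply/seteqP; split => z // Xz; apply: nX; exists z.
exact: fa0.
Qed.

Fixpoint atoms (l : seq (set Omega)) : seq (set Omega) :=
  if l is a :: l' then [seq a `&` t | t <- atoms l'] ++ [seq ~` a `&` t | t <- atoms l']
  else [:: setT].

Lemma atomsB l : (forall a, inS a l -> B a) -> forall t, inS t (atoms l) -> B t.
Proof.
case: hB => BT BI BC.
elim: l => [|a l IH] Hl t /=; first by case=> // ->.
have Ba : B a by apply: (Hl); left.
have IH' := IH (fun b Hb => Hl b (or_intror Hb)).
move=> /inS_cat [] /inS_map [u [Hu ->]]; apply: (BI); try exact: IH' Hu.
  exact: Ba.
exact: BC.
Qed.

Lemma atoms_sep l t a : inS t (atoms l) -> inS a l -> t `<=` a \/ t `<=` ~` a.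
Proof.
elim: l t => [|b l IH] t //= /inS_cat [] /inS_map [u [Hu ->]] [->|Ha].
- by left; apply: subIsetl.
- by case: (IH _ Hu Ha) => H; [left|right]; apply: subIset; right.
- by right; apply: subIsetl.
- by case: (IH _ Hu Ha) => H; [left|right]; apply: subIset; right.
Qed.

Lemma atoms_sum l : (forall a, inS a l -> B a) -> forall X, B X ->
  m X = \sum_(t <- atoms l) m (X `&` t).
Proof.
case: hB => BT BI BC.
elim: l => [|a l IH] Hl X BX /=; first by rewrite big_cons big_nil addr0 setIT.
have Ba : B a by apply: (Hl); left.
have Hl' := (fun b Hb => Hl b (or_intror Hb)).
rewrite big_cat !big_map /= -big_split /= (IH Hl' X BX); apply: eq_sum_inS => t Ht.
have Bt := atomsB Hl' Ht.
rewrite (fasplit (BI _ _ BX Bt) Ba); congr (m _ + m _).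
  by rewrite setICA setIC.
by rewrite setICA setIC.
Qed.
End BA.
Section Amal.
Variables (Omega : Type) (R : realType) (p0 : Omega).
Variables (B1 B2 : set Omega -> Prop) (m1 m2 : set Omega -> R) (pi : set Omega -> set Omega).
Hypotheses (hB1 : balg B1) (hB2 : balg B2) (hm1 : faon B1 m1) (hm2 : faon B2 m2).
Hypotheses (hpi1 : forall X, B1 X -> B1 (pi X)) (hpi2 : forall X, B1 X -> B2 (pi X))
  (hpisub : forall X, B1 X -> X `<=` pi X)
  (hpipt : forall X q, B1 X -> pi X q -> exists p, X p /\ forall Y, B2 Y -> Y q -> Y p)
  (h12 : forall X, B1 X -> B2 X -> m1 X = m2 X).

Definition ind (D : set Omega) p : R := if pselect (D p) then 1 else 0.

Lemma ind1 D p : D p -> ind D p = 1.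
Proof. by rewrite /ind; case: (pselect (D p)). Qed.
Lemma ind0 D p : ~ D p -> ind D p = 0.
Proof. by rewrite /ind; case: (pselect (D p)). Qed.

Lemma cancel0 (x c : R) : (c = 0 -> x = 0) -> x * c / c = x.
Proof.
have [->|c0] := eqVneq c 0; first by move=> ->; rewrite ?mul0r.
by move=> _; rewrite mulfK.
Qed.

Lemma finite_amal l1 l2 : (forall a, inS a l1 -> B1 a) -> (forall b, inS b l2 -> B2 b) ->
  exists mu : set Omega -> R,
    [/\ (forall D, 0 <= mu D), mu setT = 1,
        (forall D1 D2, D1 `&` D2 = set0 -> mu (D1 `|` D2) = mu D1 + mu D2),
        (forall a, inS a l1 -> mu a = m1 a) & (forall b, inS b l2 -> mu b = m2 b)].
Proof.
move=> Hl1 Hl2.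
have [B1T B1I B1C] := hB1; have [B2T B2I B2C] := hB2.
have [m1T m1p m1a] := hm1; have [m2T m2p m2a] := hm2.
pose A1 := atoms l1; pose lg := map pi A1; pose G := atoms lg; pose A2 := atoms l2.
have A1B : forall t, inS t A1 -> B1 t := atomsB hB1 Hl1.
have A2B : forall t, inS t A2 -> B2 t := atomsB hB2 Hl2.
have lgB1 : forall t, inS t lg -> B1 t by move=> t /inS_map [u [Hu ->]]; apply: hpi1; exact: A1B.
have lgB2 : forall t, inS t lg -> B2 t by move=> t /inS_map [u [Hu ->]]; apply: hpi2; exact: A1B.
have GB1 : forall t, inS t G -> B1 t := atomsB hB1 lgB1.
have GB2 : forall t, inS t G -> B2 t := atomsB hB2 lgB2.
pose w al be ga := m1 (al `&` ga) * m2 (be `&` ga) / m1 ga.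
pose pt al be ga := if pselect (exists p, al p /\ be p /\ ga p) is left H
  then projT1 (cid H) else p0.
pose mu D := \sum_(al <- A1) \sum_(be <- A2) \sum_(ga <- G) w al be ga * ind D (pt al be ga).
have w0 al be ga : inS al A1 -> inS be A2 -> inS ga G -> 0 <= w al be ga.
  move=> Hal Hbe Hga; apply: mulr_ge0; first apply: mulr_ge0.
  - by apply: m1p; apply: B1I; [exact: A1B|exact: GB1].
  - by apply: m2p; apply: B2I; [exact: A2B|exact: GB2].
  - by rewrite invr_ge0; apply: m1p; exact: GB1.
have wpt al be ga : inS al A1 -> inS be A2 -> inS ga G -> w al be ga != 0 ->
    [/\ al (pt al be ga), be (pt al be ga) & ga (pt al be ga)].
  move=> Hal Hbe Hga; rewrite /w !mulf_eq0 !negb_or => /andP [/andP [n1 n2] _].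
  have [z [alz gaz]] := fa_ne0 hB1 hm1 n1.
  have [q [beq gaq]] := fa_ne0 hB2 hm2 n2.
  have inpi : inS (pi al) lg by apply/inS_map; exists al.
  have gapi : ga `<=` pi al.
    case: (atoms_sep Hga inpi) => // H; exfalso.
    by apply: (H z gaz); apply: (hpisub (A1B _ Hal)).
  have [p [alp Hp]] := hpipt (A1B _ Hal) (gapi q gaq).
  have ex : exists p, al p /\ be p /\ ga p.
    exists p; split => //; split; apply: Hp => //; [exact: A2B|exact: GB2].
  rewrite /pt; case: pselect => [H|//]; by have [? [? ?]] := projT2 (cid H).
have mu0 D : 0 <= mu D.
  apply: ge0_sum_inS => al Hal; apply: ge0_sum_inS => be Hbe; apply: ge0_sum_inS => ga Hga.
  by apply: mulr_ge0; [exact: w0|rewrite /ind; case: pselect].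
have muadd D1 D2 : D1 `&` D2 = set0 -> mu (D1 `|` D2) = mu D1 + mu D2.
  move=> disj; rewrite /mu -big_split; apply: eq_bigr => al _.
  rewrite -big_split; apply: eq_bigr => be _; rewrite -big_split; apply: eq_bigr => ga _.
  rewrite /= -mulrDr; congr (_ * _); rewrite /ind.
  set p := pt al be ga.
  have Hd : ~ (D1 p /\ D2 p) by move=> [a b]; have : (D1 `&` D2) p by []; rewrite disj.
  case: (pselect (D1 p)) => H1; case: (pselect (D2 p)) => H2; case: pselect => H /=;
    rewrite ?addr0 ?add0r //;
    first [by exfalso; apply: Hd | by exfalso; apply: H; left | by exfalso; apply: H; right | by case: H].
have sumbe al ga : inS ga G -> \sum_(be <- A2) w al be ga = m1 (al `&` ga) * m2 ga / m1 ga.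
  move=> Hga; rewrite /w -mulr_suml -mulr_sumr (atoms_sum hB2 hm2 Hl2 (GB2 _ Hga)).
  by congr (_ * _ / _); apply: eq_bigr => be _; rewrite setIC.
have sumal be ga : inS ga G -> \sum_(al <- A1) w al be ga = m2 (be `&` ga) * m1 ga / m1 ga.
  move=> Hga.
  have E : \sum_(al <- A1) m1 (al `&` ga) = m1 ga.
    by rewrite (atoms_sum hB1 hm1 Hl1 (GB1 _ Hga)); apply: eq_bigr => al _; rewrite setIC.
  by rewrite /w -mulr_suml -(mulr_suml _ _ (fun i => m1 (i `&` ga))) E [m1 ga * _]mulrC.
have claim1 a : B1 a -> (forall al, inS al A1 -> al `<=` a \/ al `<=` ~` a) -> mu a = m1 a.
  move=> Ba Hsep; rewrite (atoms_sum hB1 hm1 Hl1 Ba); apply: eq_sum_inS => al Hal.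
  have Bal := A1B _ Hal.
  case: (Hsep al Hal) => sub.
    transitivity (\sum_(be <- A2) \sum_(ga <- G) w al be ga).
      apply: eq_sum_inS => be Hbe; apply: eq_sum_inS => ga Hga.
      have [->|wn0] := eqVneq (w al be ga) 0; first by rewrite mul0r.
      have [H _ _] := wpt al be ga Hal Hbe Hga wn0.
      by rewrite ind1 ?mulr1 //; apply: sub.
    rewrite exchange_big /= (setIidr sub) (atoms_sum hB1 hm1 lgB1 Bal).
    apply: eq_sum_inS => ga Hga; rewrite sumbe // -(h12 (GB1 _ Hga) (GB2 _ Hga)).
    apply: cancel0 => g0.
    have Bag : B1 (al `&` ga) by apply: B1I => //; exact: GB1.
    apply/eqP; rewrite eq_le (m1p _ Bag) andbT -g0.
    by apply: (famono hB1 hm1 Bag (GB1 _ Hga)); exact: subIsetr.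
  have -> : a `&` al = set0.
    by apply/seteqP; split => z // [az alz]; exact: (sub z alz az).
  rewrite (fa0 hB1 hm1).
  transitivity (\sum_(be <- A2) \sum_(ga <- G) (0 : R)); last first.
    by rewrite big1 // => be _; rewrite big1.
  apply: eq_sum_inS => be Hbe; apply: eq_sum_inS => ga Hga.
  have [->|wn0] := eqVneq (w al be ga) 0; first by rewrite mul0r.
  have [H _ _] := wpt al be ga Hal Hbe Hga wn0.
  by rewrite ind0 ?mulr0 //; apply: sub.
have claim2 b : B2 b -> (forall be, inS be A2 -> be `<=` b \/ be `<=` ~` b) -> mu b = m2 b.
  move=> Bb Hsep; rewrite (atoms_sum hB2 hm2 Hl2 Bb) /mu exchange_big /=.
  apply: eq_sum_inS => be Hbe.
  have Bbe := A2B _ Hbe.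
  rewrite exchange_big /=.
  case: (Hsep be Hbe) => sub.
    transitivity (\sum_(ga <- G) \sum_(al <- A1) w al be ga).
      apply: eq_sum_inS => ga Hga; apply: eq_sum_inS => al Hal.
      have [->|wn0] := eqVneq (w al be ga) 0; first by rewrite mul0r.
      have [_ H _] := wpt al be ga Hal Hbe Hga wn0.
      by rewrite ind1 ?mulr1 //; apply: sub.
    rewrite (setIidr sub) (atoms_sum hB2 hm2 lgB2 Bbe).
    apply: eq_sum_inS => ga Hga; rewrite sumal //.
    apply: cancel0 => g0.
    have Bbg : B2 (be `&` ga) by apply: B2I => //; exact: GB2.
    apply/eqP; rewrite eq_le (m2p _ Bbg) andbT.
    rewrite (h12 (GB1 _ Hga) (GB2 _ Hga)) in g0; rewrite -g0.
    by apply: (famono hB2 hm2 Bbg (GB2 _ Hga)); exact: subIsetr.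
  have -> : b `&` be = set0.
    by apply/seteqP; split => z // [bz bez]; exact: (sub z bez bz).
  rewrite (fa0 hB2 hm2).
  transitivity (\sum_(ga <- G) \sum_(al <- A1) (0 : R)); last first.
    by rewrite big1 // => ga _; rewrite big1.
  apply: eq_sum_inS => ga Hga; apply: eq_sum_inS => al Hal.
  have [->|wn0] := eqVneq (w al be ga) 0; first by rewrite mul0r.
  have [_ H _] := wpt al be ga Hal Hbe Hga wn0.
  by rewrite ind0 ?mulr0 //; apply: sub.
exists mu; split => //.
- by rewrite claim1 // => al _; left.
- by move=> a Ha; apply: claim1; [exact: Hl1|move=> al Hal; exact: atoms_sep Hal Ha].
- by move=> b Hb; apply: claim2; [exact: Hl2|move=> be Hbe; exact: atoms_sep Hbe Hb].
Qed.
Fixpoint filt (P : set Omega -> Prop) (l : seq (set Omega)) : seq (set Omega) :=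
  if l is a :: l' then (if pselect (P a) then a :: filt P l' else filt P l') else [::].

Lemma filtP P l a : inS a (filt P l) <-> inS a l /\ P a.
Proof.
elim: l => [|b l IH] /=; first by split => // -[].
case: pselect => Pb /=; rewrite ?IH; split.
- by case=> [->|[]]; split => //; [left|right].
- by case=> -[->|?] ?; [left|right].
- by case=> ? ?; split => //; right.
- by case=> -[->|?] ?; [exfalso; apply: Pb|].
Qed.

Lemma finite_amal' l1 l2 : exists mu : set Omega -> R,
    [/\ (forall D, 0 <= mu D), mu setT = 1,
        (forall D1 D2, D1 `&` D2 = set0 -> mu (D1 `|` D2) = mu D1 + mu D2),
        (forall a, inS a l1 -> B1 a -> mu a = m1 a) & (forall b, inS b l2 -> B2 b -> mu b = m2 b)].
Proof.
have [mu [H1 H2 H3 H4 H5]] := @finite_amal (filt B1 l1) (filt B2 l2)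
  (fun a Ha => (proj1 (filtP _ _ _) Ha).2) (fun a Ha => (proj1 (filtP _ _ _) Ha).2).
exists mu; split => //.
- by move=> a Ha Ba; apply: H4; apply/filtP.
- by move=> b Hb Bb; apply: H5; apply/filtP.
Qed.

Lemma amalgam : exists om : set Omega -> R,
    [/\ (forall D, 0 <= om D), om setT = 1,
        (forall D1 D2, D1 `&` D2 = set0 -> om (D1 `|` D2) = om D1 + om D2),
        (forall X, B1 X -> om X = m1 X) & (forall X, B2 X -> om X = m2 X)].
Proof.
pose J := (seq (set Omega) * seq (set Omega))%type.
pose muj (j : J) := projT1 (cid (finite_amal' j.1 j.2)).
have mujP (j : J) := projT2 (cid (finite_amal' j.1 j.2)).
pose sub (j0 j : J) := (forall a, inS a j0.1 -> inS a j.1) /\ (forall b, inS b j0.2 -> inS b j.2).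
pose F := filter_from [set: J] (fun j0 => [set j | sub j0 j]).
have FF : ProperFilter F.
  apply: filter_from_proper; last by move=> i _; exists i; split.
  apply: filter_from_filter; first by exists ([::], [::]).
  move=> i k _ _; exists (i.1 ++ k.1, i.2 ++ k.2) => // j [s1 s2]; split; split.
  - by move=> a Ha; apply: s1; apply/inS_cat; left.
  - by move=> a Ha; apply: s2; apply/inS_cat; left.
  - by move=> a Ha; apply: s1; apply/inS_cat; right.
  - by move=> a Ha; apply: s2; apply/inS_cat; right.
have [U [UU FU]] := ultraFilterLemma FF.
have bnd D (j : J) : 0 <= muj j D <= 1.
  have [H1 H2 H3 _ _] := mujP j.
  rewrite H1 /=; have := H3 D (~` D) (setICr D); rewrite setUCr H2 => E.
  have := H1 (~` D); move: E; rewrite /muj; lra.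
pose om D := projT1 (cid (ulim UU (bnd D))).
have omP D : 0 <= om D <= 1 /\ (fun j => muj j D) @ U --> om D.
  exact: projT2 (cid (ulim UU (bnd D))).
have cst D c : (\forall j \near U, muj j D = c) -> om D = c.
  move=> H; apply: (@cvg_unique _ (@Rhausdorff R) ((fun j => muj j D) @ U) _).
    exact: (omP D).2.
  exact: cvg_near_cst.
have ev (X : set Omega) (b : bool) : U [set j | sub (if b then ([:: X], [::]) else ([::], [:: X])) j].
  apply: FU; exists (if b then ([:: X], [::]) else ([::], [:: X])) => //.
exists om; split.
- by move=> D; have [/andP [] ] := omP D.
- by apply: cst; apply: filterE => j; rewrite /muj; have [_ -> _ _ _] := mujP j.
- move=> D1 D2 disj.
  apply: (@cvg_unique _ (@Rhausdorff R) ((fun j => muj j (D1 `|` D2)) @ U) _).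
    exact: (omP _).2.
  have -> : (fun j => muj j (D1 `|` D2)) = (fun j => muj j D1 + muj j D2).
    by apply/funext => j /=; rewrite /muj; have [_ _ H _ _] := mujP j; rewrite H.
  exact: (cvgD (omP D1).2 (omP D2).2).
- move=> X BX; apply: cst; apply: filterS (ev X true) => j [s _].
  have [_ _ _ H _] := mujP j; apply: H => //; apply: s; by left.
- move=> X BX; apply: cst; apply: filterS (ev X false) => j [_ s].
  have [_ _ _ _ H] := mujP j; apply: H => //; apply: s; by left.
Qed.
End Amal.
Section Model.
Variables (L : language) (M : Type) (I : interp L M) (x0 : M).

Fixpoint trename (rho : nat -> nat) (t : term L M) : term L M :=
  match t with
  | tvar i => @tvar L M (rho i)
  | tpar c => @tpar L M c
  | tapp f args => @tapp L M f (fun j => trename rho (args j))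
  end.

Definition upr (rho : nat -> nat) : nat -> nat :=
  fun i => match i with 0 => 0 | S j => S (rho j) end.

Fixpoint frename (rho : nat -> nat) (phi : formula L M) : formula L M :=
  match phi with
  | feq t1 t2 => feq (trename rho t1) (trename rho t2)
  | Defs.frel r args => @Defs.frel L M r (fun j => trename rho (args j))
  | fnot psi => fnot (frename rho psi)
  | fand psi chi => fand (frename rho psi) (frename rho chi)
  | fex psi => fex (frename (upr rho) psi)
  end.

Fixpoint teval_rename (rho : nat -> nat) (e : nat -> M) (t : term L M) {struct t} :
  teval I e (trename rho t) = teval I (fun i => e (rho i)) t :=
  match t as t0 return teval I e (trename rho t0) = teval I (fun i => e (rho i)) t0 with
  | tvar i => erefl
  | tpar c => erefl
  | tapp f args => congr1 (@fint L M I f) (funext (fun j => teval_rename rho e (args j)))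
  end.

Fixpoint tparams_rename (C : set M) (rho : nat -> nat) (t : term L M) {struct t} :
  tparams_in C t -> tparams_in C (trename rho t) :=
  match t as t0 return tparams_in C t0 -> tparams_in C (trename rho t0) with
  | tvar i => fun _ => Logic.I
  | tpar c => fun h => h
  | tapp f args => fun h j => @tparams_rename C rho (args j) (h j)
  end.

Fixpoint tparams_mono (C C' : set M) (hC : C `<=` C') (t : term L M) {struct t} :
  tparams_in C t -> tparams_in C' t :=
  match t as t0 return tparams_in C t0 -> tparams_in C' t0 with
  | tvar i => fun _ => Logic.I
  | tpar c => fun h => hC c h
  | tapp f args => fun h j => @tparams_mono C C' hC (args j) (h j)
  end.

Lemma sat_rename rho e phi : sat I e (frename rho phi) <-> sat I (fun i => e (rho i)) phi.
Proof.
elim: phi rho e => [t1 t2|r args|psi IH|psi IH chi IH'|psi IH] rho e /=.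
- by rewrite !teval_rename.
- by have -> : (fun j => teval I e (trename rho (args j))) = (fun j => teval I (fun i => e (rho i)) (args j))
    by apply/funext => j; rewrite teval_rename.
- by rewrite IH.
- by rewrite IH IH'.
- split=> -[m Hm]; exists m; move: Hm; rewrite IH;
  by have -> : (fun i => scons m e (upr rho i)) = scons m (fun i => e (rho i)) by apply/funext => -[].
Qed.

Lemma params_rename (C : set M) rho (phi : formula L M) : params_in C phi -> params_in C (frename rho phi).
Proof.
elim: phi rho => [t1 t2|r args|psi IH|psi IH chi IH'|psi IH] rho /=.
- by case=> ? ?; split; apply: tparams_rename.
- by move=> h j; apply: tparams_rename.
- exact: IH.
- by case=> ? ?; split; [apply: IH|apply: IH'].
- exact: IH.
Qed.

Lemma params_mono (C C' : set M) (phi : formula L M) : C `<=` C' -> params_in C phi -> params_in C' phi.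
Proof.
move=> hC; elim: phi => [t1 t2|r args|psi IH|psi IH chi IH'|psi IH] /=.
- by case=> ? ?; split; apply: tparams_mono hC _ _.
- by move=> h j; apply: tparams_mono hC _ _.
- exact: IH.
- by case=> ? ?; split; [apply: IH|apply: IH'].
- exact: IH.
Qed.

Definition fexv (j : nat) (phi : formula L M) : formula L M :=
  fex (frename (fun i => if i == j then 0 else i.+1) phi).

Lemma sat_fexv e j phi : sat I e (fexv j phi) <-> exists m, sat I (fun i => if i == j then m else e i) phi.
Proof.
rewrite /fexv /=; split=> -[m Hm]; exists m; move: Hm; rewrite sat_rename;
by have -> : (fun i => scons m e (if i == j then 0 else i.+1)) = (fun i => if i == j then m else e i)
  by apply/funext => i; case: (i == j).
Qed.

Definition fexs (l : seq nat) (phi : formula L M) : formula L M := foldr fexv phi l.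

Lemma sat_fexs e l phi : sat I e (fexs l phi) <->
  exists e', (forall i, i \notin l -> e' i = e i) /\ sat I e' phi.
Proof.
elim: l e => [|j l IH] e.
  split; first by move=> H; exists e.
  by case=> e' [He' H]; have -> : e = e' by apply/funext => i; rewrite He'.
have -> : fexs (j :: l) phi = fexv j (fexs l phi) by [].
rewrite sat_fexv; split.
  case=> m /IH [e' [He' H]]; exists e'; split => // i; rewrite in_cons negb_or => /andP [ij il].
  by rewrite He' // (negbTE ij).
case=> e' [He' H]; exists (e' j); apply/IH; exists e'; split => // i il.
case: (eqVneq i j) => [->//|ij]; apply: He'; by rewrite in_cons negb_or ij.
Qed.

Lemma params_fexs (C : set M) l (phi : formula L M) : params_in C phi -> params_in C (fexs l phi).
Proof. by elim: l => //= j l IH H; apply: params_rename; exact: IH. Qed.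

Definition ext (N : nat) (a : 'I_N -> M) : nat -> M :=
  fun i => if (insub i : option 'I_N) is Some o then a o else x0.

Lemma extK N (a : 'I_N -> M) (o : 'I_N) : ext a o = a o.
Proof. by rewrite /ext valK. Qed.

Lemma restr_ext N (a : 'I_N -> M) : (fun i : 'I_N => ext a i) = a.
Proof. by apply/funext => i; rewrite extK. Qed.

Section Def.
Variable (N : nat).

Lemma def_setT (C : set M) : definable I C (@setT ('I_N -> M)).
Proof. by exists (feq (@tvar L M 0) (@tvar L M 0)). Qed.

Lemma def_setI (C : set M) (X Y : set ('I_N -> M)) :
  definable I C X -> definable I C Y -> definable I C (X `&` Y).
Proof.
move=> [p [pC Hp]] [q [qC Hq]]; exists (fand p q); split => [|e]; first by split.
by rewrite /= -Hp -Hq.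
Qed.

Lemma def_setC (C : set M) (X : set ('I_N -> M)) : definable I C X -> definable I C (~` X).
Proof. by move=> [p [pC Hp]]; exists (fnot p); split => // e /=; rewrite -Hp. Qed.

Lemma def_mono (C C' : set M) (X : set ('I_N -> M)) : C `<=` C' -> definable I C X -> definable I C' X.
Proof. by move=> hC [p [pC Hp]]; exists p; split => //; exact: params_mono pC. Qed.

Lemma balg_def (C : set M) : balg (definable I C (n:=N)).
Proof. split; [exact: def_setT|exact: def_setI|exact: def_setC]. Qed.

End Def.

Section XY.
Variables (n k : nat).
Local Notation N := (n + k)%N.

Definition prex (D : set ('I_n -> M)) : set ('I_N -> M) := [set a | D (fun i => a (lshift k i))].
Definition prey (D : set ('I_k -> M)) : set ('I_N -> M) := [set a | D (fun i => a (rshift n i))].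
Definition joinxy (d : 'I_n -> M) (y : 'I_k -> M) : 'I_N -> M :=
  fun i => if (i < n)%N then ext d i else ext y (i - n).
Definition slicex (X : set ('I_N -> M)) : set ('I_n -> M) := [set d | X (joinxy d (fun _ => x0))].
Definition slicey (X : set ('I_N -> M)) : set ('I_k -> M) := [set d | X (joinxy (fun _ => x0) d)].
Definition xinv (X : set ('I_N -> M)) :=
  forall a b, (forall i, a (lshift k i) = b (lshift k i)) -> X a -> X b.
Definition yinv (X : set ('I_N -> M)) :=
  forall a b, (forall i, a (rshift n i) = b (rshift n i)) -> X a -> X b.

Lemma joinxy_l d y (i : 'I_n) : joinxy d y (lshift k i) = d i.
Proof. by rewrite /joinxy /= ltn_ord extK. Qed.

Lemma joinxy_r d y (i : 'I_k) : joinxy d y (rshift n i) = y i.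
Proof.
rewrite /joinxy /=; have -> : (n + i < n)%N = false by rewrite ltnNge leq_addr.
by rewrite addKn extK.
Qed.

Lemma prex_def C D : definable I C D -> definable I C (prex D).
Proof. by move=> [p [pC Hp]]; exists p; split => // e; rewrite -Hp. Qed.

Lemma prey_def C D : definable I C D -> definable I C (prey D).
Proof.
move=> [p [pC Hp]]; exists (frename (addn n) p); split; first exact: params_rename.
by move=> e; rewrite sat_rename -(Hp (fun j => e (n + j)%N)).
Qed.

Lemma prex_xinv D : xinv (prex D).
Proof. by move=> a b ab; rewrite /prex /=; have -> : (fun i => b (lshift k i)) = (fun i => a (lshift k i)) by apply/funext => i; rewrite ab. Qed.

Lemma prey_yinv D : yinv (prey D).
Proof. by move=> a b ab; rewrite /prey /=; have -> : (fun i => b (rshift n i)) = (fun i => a (rshift n i)) by apply/funext => i; rewrite ab. Qed.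

Lemma slicex_prex D : slicex (prex D) = D.
Proof.
by apply/funext => d; rewrite /slicex /prex /=; congr D; apply/funext => i; rewrite joinxy_l.
Qed.

Lemma slicey_prey D : slicey (prey D) = D.
Proof.
by apply/funext => d; rewrite /slicey /prey /=; congr D; apply/funext => i; rewrite joinxy_r.
Qed.

Lemma slicex_pre X : xinv X -> X = prex (slicex X).
Proof.
move=> hX; apply/seteqP; split => a /=.
  by apply: hX => i; rewrite joinxy_l.
by apply: hX => i; rewrite joinxy_l.
Qed.

Lemma slicey_pre X : yinv X -> X = prey (slicey X).
Proof.
move=> hX; apply/seteqP; split => a /=.
  by apply: hX => i; rewrite joinxy_r.
by apply: hX => i; rewrite joinxy_r.
Qed.

Lemma slicex_def C X : definable I C X -> xinv X -> definable I C (slicex X).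
Proof.
move=> [p [pC Hp]] hX; exists p; split => // e; rewrite -Hp /slicex /=.
by split; apply: hX => i; rewrite joinxy_l.
Qed.

Lemma slicey_def C X : definable I C X -> yinv X -> definable I C (slicey X).
Proof.
move=> [p [pC Hp]] hX; exists (frename (fun j => j - n)%N p); split; first exact: params_rename.
move=> e; rewrite sat_rename -(Hp (fun j => e (j - n)%N)) /slicey /=.
by split; apply: hX => i; rewrite joinxy_r /= addKn.
Qed.

Definition pixs (X : set ('I_N -> M)) : set ('I_N -> M) :=
  [set a | exists a', X a' /\ forall i, a' (lshift k i) = a (lshift k i)].
Definition piys (X : set ('I_N -> M)) : set ('I_N -> M) :=
  [set a | exists a', X a' /\ forall i, a' (rshift n i) = a (rshift n i)].

Lemma pixs_xinv X : xinv (pixs X).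
Proof. by move=> a b ab [a' [Xa' H]]; exists a'; split => // i; rewrite H ab. Qed.

Lemma piys_yinv X : yinv (piys X).
Proof. by move=> a b ab [a' [Xa' H]]; exists a'; split => // i; rewrite H ab. Qed.

Lemma pixs_def C X : definable I C X -> definable I C (pixs X).
Proof.
move=> [p [pC Hp]]; exists (fexs (iota n k) p); split; first exact: params_fexs.
move=> e; rewrite sat_fexs; split.
  case=> a' [Xa' Ha']; exists (fun j => if (n <= j < n + k)%N then ext a' j else e j); split.
    by move=> j; rewrite mem_iota => /negbTE ->.
  rewrite -Hp; suff -> : (fun i : 'I_N => if (n <= i < n + k)%N then ext a' i else e i) = a' by [].
  apply/funext => i; rewrite ltn_ord andbT; case: leqP => ni; first by rewrite extK.
  have -> : i = lshift k (Ordinal ni) by apply: val_inj.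
  by rewrite Ha'.
case=> e' [He' Hs]; exists (fun i : 'I_N => e' i); split; first by rewrite Hp.
move=> i /=; apply: He'; rewrite mem_iota negb_and; apply/orP; left.
by rewrite -ltnNge ltn_ord.
Qed.

Lemma piys_def C X : definable I C X -> definable I C (piys X).
Proof.
move=> [p [pC Hp]]; exists (fexs (iota 0 n) p); split; first exact: params_fexs.
move=> e; rewrite sat_fexs; split.
  case=> a' [Xa' Ha']; exists (fun j => if (j < n)%N then ext a' j else e j); split.
    by move=> j; rewrite mem_iota add0n /= => /negbTE ->.
  rewrite -Hp; suff -> : (fun i : 'I_N => if (i < n)%N then ext a' i else e i) = a' by [].
  apply/funext => i; case: ltnP => ni; first by rewrite extK.
  have ik : (i - n < k)%N by have := ltn_ord i; lia.
  have -> : i = rshift n (Ordinal ik) by apply: val_inj => /=; lia.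
  by rewrite Ha'.
case=> e' [He' Hs]; exists (fun i : 'I_N => e' i); split; first by rewrite Hp.
move=> i /=; apply: He'; rewrite mem_iota /= add0n.
by rewrite -leqNgt leq_addr.
Qed.

End XY.
End Model.
Section Card.
Variables (T : Type) (t0 : T).

Definition inj_into (X Y : set T) (f : T -> T) :=
  (forall x, X x -> Y (f x)) /\ (forall x y, X x -> X y -> f x = f y -> x = y).
Definition cle (X Y : set T) := exists f, inj_into X Y f.

Definition pinj (X Y : set T) (G : set (T * T)) :=
  (forall p, G p -> X p.1 /\ Y p.2) /\
  (forall x y y', G (x, y) -> G (x, y') -> y = y') /\
  (forall x x' y, G (x, y) -> G (x', y) -> x = x').

Lemma comparability (X Y : set T) : cle X Y \/ cle Y X.
Proof.
have [G [[GXY [Gf Gi]] Gmax]] : exists A, pinj X Y A /\ forall B, A `<` B -> ~ pinj X Y B.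
  apply: Zorn_bigcup => F FP Ftot; split; [|split].
  - by move=> p [G FG Gp]; exact: (FP G FG).1 p Gp.
  - move=> x y y' [G1 F1 H1] [G2 F2 H2]; have [s12|s21] := Ftot _ _ F1 F2.
    + exact: (FP G2 F2).2.1 x y y' (s12 _ H1) H2.
    + exact: (FP G1 F1).2.1 x y y' H1 (s21 _ H2).
  - move=> x x' y [G1 F1 H1] [G2 F2 H2]; have [s12|s21] := Ftot _ _ F1 F2.
    + exact: (FP G2 F2).2.2 x x' y (s12 _ H1) H2.
    + exact: (FP G1 F1).2.2 x x' y H1 (s21 _ H2).
have [Htot|Hntot] := pselect (forall x, X x -> exists y, G (x, y)).
  left; pose f x := if pselect (exists y, G (x, y)) is left H then projT1 (cid H) else t0.
  have fG x : X x -> G (x, f x).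
    move=> Xx; rewrite /f; case: pselect => [H|H]; last by exfalso; apply: H; exact: Htot.
    exact: (projT2 (cid H)).
  exists f; split.
    by move=> x Xx; exact: (GXY _ (fG x Xx)).2.
  move=> x y Xx Xy fxy; apply: (Gi x y (f x)); first exact: fG.
  by rewrite fxy; exact: fG.
have [Hsur|Hnsur] := pselect (forall y, Y y -> exists x, G (x, y)).
  right; pose f y := if pselect (exists x, G (x, y)) is left H then projT1 (cid H) else t0.
  have fG y : Y y -> G (f y, y).
    move=> Yy; rewrite /f; case: pselect => [H|H]; last by exfalso; apply: H; exact: Hsur.
    exact: (projT2 (cid H)).
  exists f; split.
    by move=> y Yy; exact: (GXY _ (fG y Yy)).1.
  move=> x y Yx Yy fxy; apply: (Gf (f x) x y); first exact: fG.
  by rewrite fxy; exact: fG.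
exfalso.
move/existsPNP: Hntot => [x0 Xx0 nx0].
move/existsPNP: Hnsur => [y0 Yy0 ny0].
apply: (Gmax (G `|` [set (x0, y0)])).
  split; first by move=> p Gp; left.
  move=> /(_ (x0, y0)) H; have : G (x0, y0) by apply: H; right.
  by move=> Gxy; apply: nx0; exists y0.
split; [|split].
- by move=> p [Gp|->]; [exact: GXY|].
- move=> x y y' [H1|H1] [H2|H2].
  + exact: Gf H1 H2.
  + by case: H2 => ? ?; subst; exfalso; apply: nx0; exists y.
  + by case: H1 => ? ?; subst; exfalso; apply: nx0; exists y'.
  + by case: H1 => ? ?; case: H2 => ? ?; subst.
- move=> x x' y [H1|H1] [H2|H2].
  + exact: Gi H1 H2.
  + by case: H2 => ? ?; subst; exfalso; apply: ny0; exists x.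
  + by case: H1 => ? ?; subst; exfalso; apply: ny0; exists x'.
  + by case: H1 => ? ?; case: H2 => ? ?; subst.
Qed.

End Card.
Section Dbl.
Variables (T : Type) (t0 : T).

Definition rngG (G : set ((bool * T) * T)) := [set y | exists p, G (p, y)].

Definition pdbl (X : set T) (G : set ((bool * T) * T)) :=
  [/\ (forall b x y, G ((b, x), y) -> X y),
      (forall b x y, G ((b, x), y) -> rngG G x),
      (forall x, rngG G x -> forall b, exists y, G ((b, x), y)),
      (forall p y y', G (p, y) -> G (p, y') -> y = y') &
      (forall p p' y, G (p, y) -> G (p', y) -> p = p')].

Lemma pdbl_ext X G H : pdbl X G -> pdbl X H -> (exists y, rngG H y) ->
  (forall y, rngG H y -> rngG G y -> False) -> G `<` G `|` H /\ pdbl X (G `|` H).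
Proof.
move=> [Ga Gb Gc Gd Ge] [Ha Hb Hc Hd He] [y0 [p0 Hp0]] disj.
have rG z : rngG G z -> rngG (G `|` H) z by case=> p Gp; exists p; left.
have rH z : rngG H z -> rngG (G `|` H) z by case=> p Gp; exists p; right.
split.
  split; first by move=> q Gq; left.
  move=> /(_ (p0, y0)) H0; have : (G `|` H) (p0, y0) by right.
  move=> /H0 Gq; apply: (disj y0); by [exists p0 | exists p0].
split.
- by move=> b x y [/Ga|/Ha].
- move=> b x y [/Gb|/Hb]; [exact: rG|exact: rH].
- move=> x [p [Gp|Hp]] b.
    have [y Gy] := Gc x (ex_intro _ p Gp) b; by exists y; left.
  have [y Hy] := Hc x (ex_intro _ p Hp) b; by exists y; right.
- move=> [b x] y y' [G1|H1] [G2|H2].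
  + exact: Gd G1 G2.
  + by exfalso; apply: (disj x); [exact: (Hb _ _ _ H2)|exact: (Gb _ _ _ G1)].
  + by exfalso; apply: (disj x); [exact: (Hb _ _ _ H1)|exact: (Gb _ _ _ G2)].
  + exact: Hd H1 H2.
- move=> p p' y [G1|H1] [G2|H2].
  + exact: Ge G1 G2.
  + by exfalso; apply: (disj y); [exists p'|exists p].
  + by exfalso; apply: (disj y); [exists p|exists p'].
  + exact: He H1 H2.
Qed.

Lemma doubling (X : set T) (h : nat -> T) : injective h -> (forall n, X (h n)) ->
  exists d : bool * T -> T, (forall b x, X x -> X (d (b, x))) /\
    (forall b x b' x', X x -> X x' -> d (b, x) = d (b', x') -> b = b' /\ x = x').
Proof.
move=> hinj hX.
have [G [[Ga Gb Gc Gd Ge] Gmax]] :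
    exists A, pdbl X A /\ forall B, A `<` B -> ~ pdbl X B.
  apply: Zorn_bigcup => F FP Ftot.
  have rU G z : F G -> rngG G z -> rngG (\bigcup_(X in F) X) z.
    by move=> FG [p Gp]; exists p; exists G.
  split.
  - by move=> b x y [G FG Gp]; have [Ga _ _ _ _] := FP G FG; exact: Ga Gp.
  - by move=> b x y [G FG Gp]; have [_ Gb _ _ _] := FP G FG; apply: (rU G) => //; exact: Gb Gp.
  - move=> x [p [G FG Gp]] b; have [_ _ Gc _ _] := FP G FG.
    by have [y Gy] := Gc x (ex_intro _ p Gp) b; exists y; exists G.
  - move=> p y y' [G1 F1 H1] [G2 F2 H2]; have [s12|s21] := Ftot _ _ F1 F2.
    + by have [_ _ _ Gd _] := FP G2 F2; exact: Gd (s12 _ H1) H2.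
    + by have [_ _ _ Gd _] := FP G1 F1; exact: Gd H1 (s21 _ H2).
  - move=> p p' y [G1 F1 H1] [G2 F2 H2]; have [s12|s21] := Ftot _ _ F1 F2.
    + by have [_ _ _ _ Ge] := FP G2 F2; exact: Ge (s12 _ H1) H2.
    + by have [_ _ _ _ Ge] := FP G1 F1; exact: Ge H1 (s21 _ H2).
have pG : pdbl X G by [].
pose P := rngG G.
pose F q := if pselect (exists y, G (q, y)) is left H then projT1 (cid H) else t0.
have FG b x : P x -> G ((b, x), F (b, x)).
  move=> Px; rewrite /F; case: pselect => [H|H]; first exact: (projT2 (cid H)).
  by exfalso; apply: H; exact: Gc.
have PX x : P x -> X x by case=> -[b z] /Ga.
have FP b x : P x -> P (F (b, x)) by move=> Px; exists (b, x); exact: FG.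
have [[phi [phiX phiI]]|[psi [psiX psiI]]] := comparability t0 P (X `\` P).
  exfalso.
  have [[y0 Py0]|P0] := pselect (exists y, P y).
    pose H := [set q | exists b x y, G ((b, x), y) /\ q = ((b, phi x), phi y)].
    have rH z : rngG H z <-> exists y, P y /\ z = phi y.
      split; first by case=> p [b [x [y [Gy [_ ->]]]]]; exists y; split => //; exists (b, x).
      case=> y [[[b x] Gy] ->]; exists (b, phi x); by exists b, x, y; split.
    have pH : pdbl X H.
      split.
      - by move=> b x y [b' [x' [y' [Gy E]]]]; case: E => _ _ ->; have [] := phiX y' (ex_intro _ _ Gy).
      - move=> b x y [b' [x' [y' [Gy E]]]]; case: E => _ -> _; apply/rH; exists x'; split => //.
        exact: Gb Gy.
      - move=> x /rH [y [Py ->]] b; exists (phi (F (b, y))); exists b, y, (F (b, y)).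
        by split => //; exact: FG.
      - move=> p y y' [b [x [z [Gz E1]]]] [b' [x' [z' [Gz' E]]]].
        case: E1 => ? ?; subst; case: E => ? Ex ?; subst; congr phi.
        have Px : P x by exact: Gb Gz.
        have Px' : P x' by exact: Gb Gz'.
        by rewrite -(phiI _ _ Px Px' Ex) in Gz'; exact: Gd Gz Gz'.
      - move=> p p' y [b [x [z [Gz E1]]]] [b' [x' [z' [Gz' E2]]]].
        case: E1 => ? ?; subst; case: E2 => ? E; subst.
        have Pz : P z by exists (b, x).
        have Pz' : P z' by exists (b', x').
        rewrite -(phiI _ _ Pz Pz' E) in Gz'.
        by have [-> ->] := Ge _ _ _ Gz Gz'.
    have disj : forall z, rngG H z -> rngG G z -> False.
      by move=> z /rH [y [Py ->]] Pz; have [] := phiX y Py.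
    have [lt pU] := pdbl_ext pG pH (ex_intro _ (phi y0) (proj2 (rH _) (ex_intro _ y0 (conj Py0 erefl)))) disj.
    exact: Gmax lt pU.
  pose H := [set q | exists (b : bool) n, q = ((b, h n), h (n.*2 + b)%N)].
  have rH z : rngG H z <-> exists n, z = h n.
    split; first by case=> p [b [n [_ ->]]]; exists (n.*2 + b)%N.
    case=> m ->; exists (odd m, h m./2); exists (odd m), m./2.
    by rewrite addnC odd_double_half.
  have pH : pdbl X H.
    split.
    - by move=> b x y [b' [n E]]; case: E => _ _ ->.
    - by move=> b x y [b' [n E]]; case: E => _ -> _; apply/rH; exists n.
    - move=> x /rH [n ->] b; exists (h (n.*2 + b)%N); by exists b, n.
    - move=> p y y' [b [n E1]] [b' [n' E2]].
      by case: E1 => ? ?; subst; case: E2 => ? /hinj ? ?; subst.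
    - move=> p p' y [b [n E1]] [b' [n' E2]].
      case: E1 => ? ?; subst; case: E2 => ? /hinj E; subst.
      have [Eb En] : b = b' /\ n = n'.
        by move: E; rewrite -!muln2; case: b; case: b' => /= E; split => //; lia.
      by rewrite Eb En.
  have disj : forall z, rngG H z -> rngG G z -> False.
    by move=> z _ Pz; apply: P0; exists z.
  have [lt pU] := pdbl_ext pG pH (ex_intro _ (h 0%N) (proj2 (rH _) (ex_intro _ 0%N erefl))) disj.
  exact: Gmax lt pU.
pose iota x := if pselect (P x) then F (false, x) else F (true, psi x).
have iotaP x : X x -> P (iota x).
  move=> Xx; rewrite /iota; case: pselect => [Px|nPx]; first exact: FP.
  by apply: FP; exact: psiX.
have iotaI x x' : X x -> X x' -> iota x = iota x' -> x = x'.
  move=> Xx Xx'; rewrite /iota; case: pselect => [Px|nPx]; case: pselect => [Px'|nPx'] /=.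
  - by move=> E; have := FG false x Px; rewrite E => /(Ge _ _ _ (FG false x' Px')) [->].
  - by move=> E; have := FG false x Px; rewrite E => /(Ge _ _ _ (FG true _ (psiX x' (conj Xx' nPx')))).
  - by move=> E; have := FG true _ (psiX x (conj Xx nPx)); rewrite E => /(Ge _ _ _ (FG false _ Px')).
  - move=> E; have := FG true _ (psiX x (conj Xx nPx)); rewrite E.
    move=> /(Ge _ _ _ (FG true _ (psiX x' (conj Xx' nPx')))) [E'].
    by apply: psiI => //; split.
exists (fun q => F (q.1, iota q.2)); split.
  by move=> b x Xx /=; apply: PX; apply: FP; exact: iotaP.
move=> b x b' x' Xx Xx' /= E.
have := FG b _ (iotaP x Xx); rewrite E => /(Ge _ _ _ (FG b' _ (iotaP x' Xx'))) [-> E'].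
by split => //; apply: iotaI.
Qed.

End Dbl.
Lemma pigeon (T : Type) (X : set T) (h : nat -> T) (iota : T -> bool * T) :
  injective h -> injective iota -> (forall k, X (iota k).2) ->
  exists h2 : nat -> T, injective h2 /\ forall n, X (h2 n).
Proof.
move=> hinj iinj iX; pose u n := iota (h n).
have uinj : injective u by move=> i j /iinj /hinj.
have key b (t : nat -> nat) : injective t -> (forall i, (u (t i)).1 = b) ->
    exists h2 : nat -> T, injective h2 /\ forall n, X (h2 n).
  move=> tinj tb; exists (fun i => (u (t i)).2); split; last by move=> i; exact: iX.
  move=> i j E; apply: tinj; apply: uinj.
  by case: (u (t i)) (u (t j)) (tb i) (tb j) E => [b1 x1] [b2 x2] /= -> -> ->.
have [inf|fin] := pselect (forall N, exists n, (N <= n)%N /\ (u n).1 = false).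
  pose s N := projT1 (cid (inf N)).
  have sP N : (N <= s N)%N /\ (u (s N)).1 = false := projT2 (cid (inf N)).
  pose t := fix t i := if i is i'.+1 then s (t i').+1 else s 0%N.
  have tinc : forall i, (t i < t i.+1)%N by move=> i /=; exact: (sP _).1.
  apply: (key false t).
    move=> i j E; apply/eqP; case: (ltngtP i j) => // ij.
    + by have := homo_ltn (@ltn_trans) tinc ij; rewrite E ltnn.
    + by have := homo_ltn (@ltn_trans) tinc ij; rewrite E ltnn.
  by case=> [|i] /=; exact: (sP _).2.
move/existsNP: fin => [N HN].
apply: (key true (fun i => N + i)%N); first by move=> i j /eqP; rewrite eqn_add2l => /eqP.
move=> i; case E: (u (N + i)%N).1 => //; exfalso; apply: HN; exists (N + i)%N.
by split => //; rewrite leq_addr.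
Qed.

Lemma small_union (M K : Type) (A B : set M) :
  (exists g : nat -> K, injective g) -> small K A -> small K B -> small K (A `|` B).
Proof.
move=> [g ginj] [[fA fAi] nA] [[fB fBi] nB].
have t0 := g 0%N.
have [d [_ dI]] := @doubling K t0 setT g ginj (fun _ => I).
split.
  exists (fun x => if pselect (A x) then d (false, fA x) else d (true, fB x)).
  move=> a b Ha Hb; case: pselect => [Aa|nAa]; case: pselect => [Ab|nAb] /=.
  - by move=> /dI [] // _ /fAi; apply.
  - by move=> /dI [].
  - by move=> /dI [].
  - move=> /dI [] // _ /fBi; apply.
    + by case: Ha.
    + by case: Hb.
move=> [gg [gginj ggAB]].
pose K1 := [set k | A (gg k)].
have help (X1 X2 : set K) (Y : set M) phi : (forall k, X1 k \/ X2 k) -> inj_into X1 X2 phi ->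
    (forall k, X2 k -> Y (gg k)) ->
    exists f : K -> M, injective f /\ forall k, Y (f k).
  move=> X12 [phiX phiI] X2Y.
  pose iota k := if pselect (X1 k) then (false, phi k) else (true, k).
  have iinj : injective iota.
    move=> a b; rewrite /iota; case: pselect => [Xa|nXa]; case: pselect => [Xb|nXb] //=.
    - by case=> /phiI; apply.
    - by case.
  have iX k : X2 (iota k).2.
    rewrite /iota; case: pselect => [Xk|nXk] /=; first exact: phiX.
    by case: (X12 k).
  have [h2 [h2inj h2X]] := pigeon ginj iinj iX.
  have [d2 [d2X d2I]] := @doubling K t0 X2 h2 h2inj h2X.
  exists (fun k => gg (d2 (iota k))); split.
    move=> a b /gginj; case Ea: (iota a) => [ba xa]; case Eb: (iota b) => [bb xb].
    have := iX a; have := iX b; rewrite Ea Eb /= => Xb Xa.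
    move=> /d2I [] // ? ?; subst; apply: iinj; by rewrite Ea Eb.
  move=> k; apply: X2Y; case E: (iota k) => [b x]; apply: d2X.
  by have := iX k; rewrite E.
have [[phi Hphi]|[psi Hpsi]] := comparability t0 K1 (~` K1).
  have h1 : forall k, K1 k \/ (~` K1) k.
    by move=> k; case: (pselect (K1 k)) => ?; [left|right].
  have h2 : forall k, (~` K1) k -> B (gg k) by move=> k nK1; case: (ggAB k).
  have [f [finj fY]] := help K1 (~` K1) B phi h1 Hphi h2.
  by apply: nB; exists f.
have h1 : forall k, (~` K1) k \/ K1 k.
  by move=> k; case: (pselect (K1 k)) => ?; [right|left].
have [f [finj fY]] := help (~` K1) K1 A psi h1 Hpsi (fun k H => H).
by apply: nA; exists f.
Qed.
Lemma fa_prob_all (L : language) (M : Type) (I : interp L M) (R : realType) (N : nat) (C : set M)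
    (om : set ('I_N -> M) -> R) :
  [/\ (forall D, 0 <= om D), om setT = 1 &
      (forall D1 D2, D1 `&` D2 = set0 -> om (D1 `|` D2) = om D1 + om D2)] ->
  fa_prob I C om.
Proof. by case=> h1 h2 h3; split => //; split => // D1 D2 _ _; exact: h3. Qed.

Lemma faon_prob (L : language) (M : Type) (I : interp L M) (R : realType) (N : nat) (C : set M)
    (om : set ('I_N -> M) -> R) : fa_prob I C om -> faon (definable I C) om.
Proof. by case=> h1 [h2 h3]; split. Qed.

Import Pilot.Defs.

Theorem proposition4p8 (L : language) (M : Type) (I : interp L M) (K : Type)
    (R : realType) (n k : nat)
    (mu : set ('I_n -> M) -> R) (nu : set ('I_k -> M) -> R) :
  monster I K ->
  fa_prob I setT mu -> fa_prob I setT nu ->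
  geE I K mu nu -> smooth I K mu -> smooth I K nu.
Proof.
move=> [[x0] [gK _]] famu fanu [A [smA [lam [falam [agl Hw]]]]] [B [smB [_ Hs]]].
have [mu1 [mu0 muadd]] := famu.
pose p0 : 'I_(n + k) -> M := fun _ => x0.
pose B2 := fun X : set ('I_(n + k) -> M) => exists D, definable I setT D /\ X = @prex M n k D.
pose m2 := fun X : set ('I_(n + k) -> M) => mu (slicex x0 X).
have hB2 : balg B2.
  split.
  - by exists setT; split; [exact: def_setT|].
  - move=> X Y [D [dD ->]] [D' [dD' ->]]; exists (D `&` D'); split => //; exact: def_setI.
  - move=> X [D [dD ->]]; exists (~` D); split => //; exact: def_setC.
have hm2 : faon B2 m2.
  split.
  - by [].
  - by move=> X [D [dD ->]]; rewrite /m2 slicex_prex; exact: mu0.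
  - move=> X Y [D [dD ->]] [D' [dD' ->]] disj.
    have disj' : D `&` D' = set0.
      have E : @prex M n k (D `&` D') = set0 by exact: disj.
      by rewrite -(@slicex_prex M x0 n k (D `&` D')) E; apply/seteqP; split => d.
    have -> : @prex M n k D `|` @prex M n k D' = @prex M n k (D `|` D') by [].
    by rewrite /m2 !slicex_prex; apply: muadd.
have hpi1 : forall X, definable I A X -> definable I A (@pixs M n k X).
  by move=> X h; exact: (@pixs_def L M I x0 n k A X h).
have hpi2 : forall X, definable I A X -> B2 (@pixs M n k X).
  move=> X h; exists (slicex x0 (@pixs M n k X)); split; last exact: slicex_pre (@pixs_xinv _ n k X).
  apply: (def_mono (C := A)) => //; apply: slicex_def; [exact: (pixs_def x0 h)|exact: pixs_xinv].
have hpisub : forall X, definable I A X -> X `<=` @pixs M n k X.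
  by move=> X _ a Xa; exists a.
have hpipt : forall X q, definable I A X -> @pixs M n k X q ->
    exists p, X p /\ forall Y, B2 Y -> Y q -> Y p.
  move=> X q _ [a' [Xa' Ha']]; exists a'; split => // Y [D [_ ->]].
  by apply: prex_xinv => i; rewrite Ha'.
have h12 : forall X, definable I A X -> B2 X -> lam X = m2 X.
  move=> X dX [D [_ EX]]; rewrite /m2 EX slicex_prex.
  have dD : definable I A D.
    rewrite -(@slicex_prex M x0 n k D) -EX; apply: slicex_def => //.
    by rewrite EX; exact: prex_xinv.
  by rewrite -(agl D dD).
have [om1 [om10 om11 om1add om1l om1m]] := @amalgam _ R p0 (definable I A) B2 lam m2 (@pixs M n k)
  (balg_def I _ A) hB2 (faon_prob falam) hm2 hpi1 hpi2 hpisub hpipt h12.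
have om1x D : definable I setT D -> om1 (@prex M n k D) = mu D.
  by move=> dD; rewrite om1m /m2 ?slicex_prex //; exists D.
have Hy1 : agree I setT (piy om1) nu.
  apply: Hw; first exact: fa_prob_all.
  - by move=> D dD; exact: om1l.
  - by move=> D dD; exact: om1x.
exists (A `|` B); split; first exact: small_union.
split => // nu' fanu' agC.
have [nu1 [nu0 nuadd]] := fanu'.
pose B2' := fun X : set ('I_(n + k) -> M) => exists D, definable I setT D /\ X = @prey M n k D.
pose m2' := fun X : set ('I_(n + k) -> M) => nu' (slicey x0 X).
have hB2' : balg B2'.
  split.
  - by exists setT; split; [exact: def_setT|].
  - move=> X Y [D [dD ->]] [D' [dD' ->]]; exists (D `&` D'); split => //; exact: def_setI.
  - move=> X [D [dD ->]]; exists (~` D); split => //; exact: def_setC.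
have hm2' : faon B2' m2'.
  split.
  - by [].
  - by move=> X [D [dD ->]]; rewrite /m2' slicey_prey; exact: nu0.
  - move=> X Y [D [dD ->]] [D' [dD' ->]] disj.
    have disj' : D `&` D' = set0.
      have E : @prey M n k (D `&` D') = set0 by exact: disj.
      by rewrite -(@slicey_prey M x0 n k (D `&` D')) E; apply/seteqP; split => d.
    have -> : @prey M n k D `|` @prey M n k D' = @prey M n k (D `|` D') by [].
    by rewrite /m2' !slicey_prey; apply: nuadd.
have hpi1' : forall X, definable I (A `|` B) X -> definable I (A `|` B) (@piys M n k X).
  by move=> X h; exact: (@piys_def L M I x0 n k _ X h).
have hpi2' : forall X, definable I (A `|` B) X -> B2' (@piys M n k X).
  move=> X h; exists (slicey x0 (@piys M n k X)); split; last exact: slicey_pre (@piys_yinv _ n k X).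
  apply: (def_mono (C := A `|` B)) => //; apply: slicey_def.
    exact: (@piys_def L M I x0 n k _ X h).
  exact: piys_yinv.
have hpisub' : forall X, definable I (A `|` B) X -> X `<=` @piys M n k X.
  by move=> X _ a Xa; exists a.
have hpipt' : forall X q, definable I (A `|` B) X -> @piys M n k X q ->
    exists p, X p /\ forall Y, B2' Y -> Y q -> Y p.
  move=> X q _ [a' [Xa' Ha']]; exists a'; split => // Y [D [_ ->]].
  by apply: prey_yinv => i; rewrite Ha'.
have h12' : forall X, definable I (A `|` B) X -> B2' X -> om1 X = m2' X.
  move=> X dX [D [dDT EX]]; rewrite /m2' EX slicey_prey.
  have dD : definable I (A `|` B) D.
    rewrite -(@slicey_prey M x0 n k D) -EX; apply: slicey_def => //.
    by rewrite EX; exact: prey_yinv.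
  rewrite (agC D dD); exact: (Hy1 D dDT).
have faom1 : fa_prob I (A `|` B) om1 by exact: fa_prob_all.
have [om [om0 om01 omadd oml omm]] := @amalgam _ R p0 (definable I (A `|` B)) B2' om1 m2' (@piys M n k)
  (balg_def I _ _) hB2' (faon_prob faom1) hm2' hpi1' hpi2' hpisub' hpipt' h12'.
have subAC : A `<=` A `|` B by move=> a Aa; left.
have subBC : B `<=` A `|` B by move=> a Ba; right.
have Hy : agree I setT (piy om) nu.
  apply: Hw; first exact: fa_prob_all.
  - by move=> D dD; rewrite oml ?om1l //; exact: def_mono dD.
  apply: Hs.
    apply: fa_prob_all; split.
    - by move=> D; exact: om0.
    - exact: om01.
    - move=> D1 D2 disj; rewrite /pix; apply: omadd.
      by apply/seteqP; split => a //= [h1 h2]; have : (D1 `&` D2) (fun i => a (lshift k i)) by []; rewrite disj.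
  move=> D dD; rewrite /pix; have dDC : definable I (A `|` B) (@prex M n k D).
    by apply: prex_def; exact: def_mono dD.
  have -> := oml _ dDC.
  by apply: om1x; apply: def_mono dD.
move=> D dD; rewrite -(Hy D dD) /piy.
have -> : nu' D = m2' (@prey M n k D) by rewrite /m2' slicey_prey.
by rewrite -omm //; exists D.
Qed.
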